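(* Let $(\nu_l)_{l\ge1}$ be probability measures on $(X,\mathcal{A})$, and $R_l:X\to\mathfrak{E}$, $R_l':X\to\mathfrak{E}'$, $l\ge1$, Borel maps into compact metric spaces $\mathfrak{E}$ and $\mathfrak{E}'$. Let $(R,R')$ be a random element of $\mathfrak{E}\times\mathfrak{E}'$ such that $(R_l,R_l')\overset{\nu_l}{\Longrightarrow}(R,R')$ as $l\to\infty$. Assume there is a $\pi$-system $\mathcal{B}^\pi_{\mathfrak{E}}$ generating the Borel $\sigma$-algebra of $\mathfrak{E}$ such that for all $E\in\mathcal{B}^\pi_{\mathfrak{E}}$ we have $\Pr[R\in\partial E]=0$ and, in case $\Pr[R\in E]>0$, $R_l'\overset{(\nu_l)_{\{R_l\in E\}}}{\Longrightarrow}R'$ as $l\to\infty$. Then $R$ and $R'$ are independent.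
   Context: $\nu_B:=\nu(B\cap\cdot)/\nu(B)$ denotes the conditional measure. $R_l\overset{\nu_l}{\Longrightarrow}R$ means the laws $\nu_l\circ R_l^{-1}$ converge weakly to the law of $R$. $\partial E$ is the topological boundary. *)

(* Defs.v *)
From HB Require Import structures.
From mathcomp Require Import all_boot all_order all_algebra.
From mathcomp Require Import all_classical all_reals all_analysis.
Set Implicit Arguments. Unset Strict Implicit. Unset Printing Implicit Defensive.
Import Order.TTheory GRing.Theory Num.Theory.
Import numFieldNormedType.Exports.
Local Open Scope classical_set_scope.
Local Open Scope ring_scope.

Definition Borel (T : topologicalType) : set (set T) := <<s [set: T], open >>.

Definition boundary (T : topologicalType) (A : set T) : set T :=
  closure A `\` interior A.

Definition borel_map d (Y : measurableType d) (T : topologicalType)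
  (f : Y -> T) : Prop :=
  forall B, Borel B -> measurable (f @^-1` B).

Definition bounded_continuous (R : realType) (T : topologicalType)
  (f : T -> R) : Prop :=
  continuous f /\ exists M : R, forall t, `|f t| <= M.

(* S_l ==>^{nu_l} S : the laws nu_l o S_l^{-1} converge weakly to the law
   P o S^{-1}, i.e. for every bounded continuous f,
   int f d(nu_l o S_l^{-1}) = int f(S_l) dnu_l  -->  int f(S) dP. *)
Definition weak_conv_law (R : realType) d (X : measurableType d)
  d' (Om : measurableType d') (T : topologicalType)
  (nu : nat -> probability X R) (S : nat -> X -> T)
  (P : probability Om R) (S0 : Om -> T) : Prop :=
  forall f : T -> R, bounded_continuous f ->
    (fun l => (\int[nu l]_x (f (S l x))%:E)%E) @ \oo -->
      (\int[P]_w (f (S0 w))%:E)%E.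

(* Conditional version: S_l ==>^{(nu_l)_{B_l}} S, where B_l = {R_l in E},
   (nu_l)_{B_l} = nu_l(B_l cap .)/nu_l(B_l), so that
   int f d((nu_l)_{B_l} o S_l^{-1}) = (int_{B_l} f(S_l) dnu_l) / nu_l(B_l). *)
Definition weak_conv_law_cond (R : realType) d (X : measurableType d)
  d' (Om : measurableType d') (T : topologicalType)
  (nu : nat -> probability X R) (B : nat -> set X) (S : nat -> X -> T)
  (P : probability Om R) (S0 : Om -> T) : Prop :=
  forall f : T -> R, bounded_continuous f ->
    (fun l => (\int[nu l]_(x in B l) (f (S l x))%:E / nu l (B l))%E) @ \oo -->
      (\int[P]_w (f (S0 w))%:E)%E.

(* Main.v *)
Require Import Defs.
From HB Require Import structures.
From mathcomp Require Import all_boot all_order all_algebra.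
From mathcomp Require Import all_classical all_reals all_analysis.
From mathcomp Require Import ring lra.
From mathcomp Require Import measurable_realfun.
Import Order.TTheory GRing.Theory Num.Theory.
Import numFieldNormedType.Exports.
Local Open Scope classical_set_scope.
Local Open Scope ring_scope.

Section topo.
Context {R : realType} {T : pseudoMetricType R}.

Lemma min_fine_lip (a b : \bar R) (r : R) : 0 <= r -> (0 <= a)%E -> (0 <= b)%E ->
  (a <= r%:E + b)%E -> fine (mine a 1%:E) <= r + fine (mine b 1%:E).
Proof.
move=> r0; case: a => [a||] //; case: b => [b||] //= a0 b0; rewrite ?lee_fin => h;
  rewrite -?EFin_min /=.
all: try (have [h1|h1] := leP a 1; rewrite ?(min_l h1) ?(min_r (ltW h1)));
     try (have [h2|h2] := leP b 1; rewrite ?(min_l h2) ?(min_r (ltW h2))); try lra.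
Qed.

Definition dC (C : set T) (x : T) : R := fine (mine (edist_inf C x) 1%:E).

Lemma dC_ge0 C x : 0 <= dC C x.
Proof.
rewrite /dC; apply: fine_ge0; rewrite le_min lee01 andbT; exact: edist_inf_ge0.
Qed.

Lemma dC_le1 C x : dC C x <= 1.
Proof.
rewrite /dC; have := edist_inf_ge0 C x.
case: (edist_inf C x) => [e||] //= e0.
by rewrite -EFin_min /= ge_min lexx orbT.
Qed.

Lemma dCE C x : mine (edist_inf C x) 1%:E = (dC C x)%:E.
Proof.
rewrite /dC fineK // ge0_fin_numE; last by rewrite le_min lee01 andbT edist_inf_ge0.
by apply: le_lt_trans (ltry 1); rewrite ge_min lexx orbT.
Qed.

Lemma dC_lip C x y e : 0 < e -> ball x e y -> `|dC C x - dC C y| <= e.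
Proof.
move=> e0 bxy.
have h1 : (edist (x, y) <= e%:E)%E by apply: edist_fin.
have h2 : (edist (y, x) <= e%:E)%E by rewrite edist_sym.
have k1 : (edist_inf C x <= e%:E + edist_inf C y)%E.
  apply: le_trans (edist_inf_triangle C x y) _; exact: leeD2r.
have k2 : (edist_inf C y <= e%:E + edist_inf C x)%E.
  apply: le_trans (edist_inf_triangle C y x) _; exact: leeD2r.
have := min_fine_lip _ _ _ (ltW e0) (edist_inf_ge0 C x) (edist_inf_ge0 C y) k1.
have := min_fine_lip _ _ _ (ltW e0) (edist_inf_ge0 C y) (edist_inf_ge0 C x) k2.
rewrite /dC => l1 l2; rewrite ler_norml; apply/andP; split; lra.
Qed.

Lemma dC_cont C : continuous (dC C).
Proof.
move=> x; apply/cvgrPdist_le => e e0; near=> y.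
apply: dC_lip => //; near: y; exact: nbhsx_ballx.
Unshelve. all: by end_near. Qed.

Lemma dC0 C x : C x -> dC C x = 0.
Proof. by move=> Cx; rewrite /dC edist_inf0 // min_l ?lee01. Qed.

Lemma dC_gt0 {C x} : closed C -> ~ C x -> 0 < dC C x.
Proof.
move=> cC nCx.
have : nbhs x (~` C) by apply: open_nbhs_nbhs; split => //; exact: closed_openC.
move=> /nbhs_ballP [r /= r0 rC].
have h : (r%:E <= edist_inf C x)%E.
  apply/ereal_infP => _ [a Ca <-]; rewrite leNgt; apply/negP => /edist_lt_ball.
  by move=> /rC.
have : ((Num.min r 1)%:E <= (dC C x)%:E)%E.
  by rewrite -dCE EFin_min; apply: le_min2 => //.
rewrite lee_fin; apply: lt_le_trans; rewrite lt_min r0 ltr01 //.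
Qed.

Definition hk (C : set T) (k : nat) (x : T) : R :=
  Num.max 0 (1 - k.+1%:R * dC C x).

Lemma hk_ge0 C k x : 0 <= hk C k x.
Proof. by rewrite /hk le_max lexx. Qed.

Lemma hk_le1 C k x : hk C k x <= 1.
Proof.
rewrite /hk ge_max ler01 /= lerBlDr lerDl; apply: mulr_ge0 => //; exact: dC_ge0.
Qed.

Lemma hk_cont C k : continuous (hk C k).
Proof.
move=> x; apply: (@continuous_max _ _ (cst 0) (fun x => 1 - k.+1%:R * dC C x)).
  exact: cvg_cst.
apply: continuousB; first exact: cvg_cst.
apply: continuousM; first exact: cvg_cst.
exact: dC_cont.
Qed.

Lemma hk_in C k x : C x -> hk C k x = 1.
Proof. by move=> Cx; rewrite /hk dC0 // mulr0 subr0 max_r ?ler01. Qed.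

Lemma hk_cvg C x : closed C -> hk C ^~ x @ \oo --> (\1_C x : R).
Proof.
move=> cC; have [Cx|nCx] := pselect (C x).
  rewrite indicE mem_set //.
  by apply: cvg_near_cst; near=> k; rewrite hk_in.
rewrite indicE memNset //; apply: cvg_near_cst.
have d0 := dC_gt0 cC nCx.
near=> k; rewrite /hk max_l // subr_le0.
rewrite -[X in X <= _](mulVf (lt0r_neq0 d0)) ler_pM2r //; apply: ltW.
near: k; apply: filterS (nbhs_infty_gtr (dC C x)^-1) => k hk.
by rewrite (lt_le_trans hk) // ler_nat.
Unshelve. all: by end_near. Qed.

End topo.

Section meas.
Context {R : realType} {dY : measure_display} {Y : measurableType dY} {T : topologicalType}.

Lemma borel_open (U : set T) : open U -> Borel U.
Proof. by move=> oU; apply: sub_sigma_algebra. Qed.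

Lemma borel_setD (A : set T) : Borel A -> Borel (~` A).
Proof.
move=> BA; have [_ hC _] := smallest_sigma_algebra [set: T] open.
by rewrite -setTD; apply: hC.
Qed.

Lemma borel_closed (C : set T) : closed C -> Borel C.
Proof.
move=> cC; rewrite -(setCK C); apply: borel_setD; apply: borel_open.
exact: closed_openC.
Qed.

Lemma meas_cont (S : Y -> T) (phi : T -> R) :
  borel_map S -> continuous phi -> measurable_fun setT (phi \o S).
Proof.
move=> mS cf; apply: (measurability _ (measurable_realfun.RGenOpens.measurableE R)).
move=> _ [_ [a [b ->] <-]].
rewrite setTI comp_preimage; apply: mS; apply: borel_open.
by move/continuousP: cf; apply; exact: interval_open.
Qed.

Lemma meas_indic (S : Y -> T) (A : set T) :
  borel_map S -> Borel A -> measurable_fun setT (\1_A \o S : Y -> R).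
Proof.
move=> mS BA; have -> : (\1_A \o S : Y -> R) = \1_(S @^-1` A).
  by apply/funext => y; rewrite /= !indicE.
exact: measurable_indic (mS _ BA).
Qed.

Definition okf (phi : T -> R) :=
  (continuous phi \/ exists2 A, Borel A & phi = \1_A) /\
  (forall x, 0 <= phi x <= 1).

Lemma okf_meas {S : Y -> T} {phi : T -> R} : borel_map S -> okf phi ->
  measurable_fun setT (phi \o S).
Proof.
move=> mS [[cf|[A BA ->]] _]; [exact: meas_cont|exact: meas_indic].
Qed.

Lemma okf_cont {phi : T -> R} : continuous phi -> (forall x, 0 <= phi x <= 1) -> okf phi.
Proof. by move=> cf h; split => //; left. Qed.

Lemma okf_cst1 : okf (cst 1).
Proof. by apply: okf_cont; [move=> x; exact: cvg_cst|move=> x; rewrite ler01 lexx]. Qed.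

Lemma okf_indic {A : set T} : Borel A -> okf \1_A.
Proof.
move=> BA; split; first by right; exists A.
by move=> x; rewrite indicE; case: (x \in A); rewrite ?ler01 ?lexx.
Qed.

End meas.

Section integ.
Context {R : realType} {dY : measure_display} {Y : measurableType dY}
  (mu : probability Y R) {E E' : topologicalType} (S : Y -> E) (S' : Y -> E')
  (mS : borel_map S) (mS' : borel_map S').

Definition II (phi : E -> R) (psi : E' -> R) :=
  (\int[mu]_y (phi (S y) * psi (S' y))%:E)%E.

Lemma prod01 {phi : E -> R} {psi : E' -> R} x y : okf phi -> okf psi ->
  0 <= phi x * psi y <= 1.
Proof.
move=> [_ h1] [_ h2]; have /andP[a1 a2] := h1 x; have /andP[b1 b2] := h2 y.
rewrite mulr_ge0 //=; rewrite -[1]mulr1; apply: ler_pM => //.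
Qed.

Lemma II_meas {phi : E -> R} {psi : E' -> R} : okf phi -> okf psi ->
  measurable_fun setT (fun y => (phi (S y) * psi (S' y))%:E).
Proof.
move=> f1 f2; apply/measurable_EFinP.
have m1 := okf_meas mS f1; have m2 := okf_meas mS' f2.
exact: (measurable_funM m1 m2).
Qed.

Lemma II_ge0 {phi : E -> R} {psi : E' -> R} : okf phi -> okf psi -> (0 <= II phi psi)%E.
Proof.
move=> f1 f2; apply: integral_ge0 => y _; rewrite lee_fin.
by have /andP[] := prod01 (S y) (S' y) f1 f2.
Qed.

Lemma II_le1 {phi : E -> R} {psi : E' -> R} : okf phi -> okf psi -> (II phi psi <= 1)%E.
Proof.
move=> f1 f2; rewrite /II.
apply: (@le_trans _ _ (\int[mu]_y (cst 1%:E) y)%E).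
  apply: ge0_le_integral => //.
  - by move=> y _; rewrite lee_fin; have /andP[] := prod01 (S y) (S' y) f1 f2.
  - exact: II_meas.
  - by move=> y _; rewrite lee_fin; have /andP[] := prod01 (S y) (S' y) f1 f2.
by rewrite integral_cst // mul1e probability_le1.
Qed.

Lemma II_fin {phi : E -> R} {psi : E' -> R} : okf phi -> okf psi -> II phi psi \is a fin_num.
Proof.
move=> f1 f2; rewrite ge0_fin_numE ?II_ge0 //.
exact: le_lt_trans (II_le1 f1 f2) (ltry 1).
Qed.

Lemma II_ext (phi1 phi2 : E -> R) (psi1 psi2 : E' -> R) : (forall x, phi1 x = phi2 x) ->
  (forall x, psi1 x = psi2 x) -> II phi1 psi1 = II phi2 psi2.
Proof. by move=> h1 h2; apply: eq_integral => y _; rewrite h1 h2. Qed.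

Lemma II_indic (A : set E) (B : set E') : Borel A -> Borel B ->
  II \1_A \1_B = mu (S @^-1` A `&` S' @^-1` B).
Proof.
move=> BA BB; rewrite /II.
have -> : (fun y => (\1_A (S y) * \1_B (S' y))%:E) =
    (fun y => (\1_(S @^-1` A `&` S' @^-1` B) y)%:E :> \bar R).
  by apply/funext => y; rewrite indicI /= !indicE.
by rewrite integral_indic ?setIT //; apply: measurableI; [exact: mS|exact: mS'].
Qed.

Lemma II_le (phi1 phi2 : E -> R) (psi : E' -> R) : okf phi1 -> okf phi2 -> okf psi ->
  (forall x, phi1 x <= phi2 x) -> (II phi1 psi <= II phi2 psi)%E.
Proof.
move=> f1 f2 g h; apply: ge0_le_integral.
- exact: measurableT.
- by move=> y _; rewrite lee_fin; have /andP[] := prod01 (S y) (S' y) f1 g.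
- exact: II_meas.
- exact: II_meas.
- move=> y _; rewrite lee_fin; apply: ler_wpM2r; last exact: h.
  by case: g => _ /(_ (S' y)) /andP[].
Qed.

Lemma II_dct (phik : nat -> E -> R) (phi : E -> R) (psik : nat -> E' -> R) (psi : E' -> R) :
  (forall k, okf (phik k)) -> okf phi -> (forall k, okf (psik k)) -> okf psi ->
  (forall x, phik ^~ x @ \oo --> phi x) -> (forall y, psik ^~ y @ \oo --> psi y) ->
  (fun k => II (phik k) (psik k)) @ \oo --> II phi psi.
Proof.
move=> f1 f g1 g c1 c2.
apply: (@dominated_cvg _ _ _ mu setT measurableT _ _ (cst 1%:E)).
- by move=> n; apply: II_meas.
- move=> y _; apply: cvg_EFin; first by near=> n.
  exact: (@cvgM _ _ _ _ (fun n => phik n (S y)) (fun n => psik n (S' y))).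
- by [].
- exact: (finite_measure_integrable_cst mu 1 measurableT).
- move=> n y _ /=; rewrite lee_fin; have /andP[a b] := prod01 (S y) (S' y) (f1 n) (g1 n).
  by rewrite ger0_norm.
Unshelve. all: by end_near. Qed.

Lemma II_ae (phi1 phi2 : E -> R) (psi : E' -> R) (N : set E) : okf phi1 -> okf phi2 -> okf psi ->
  Borel N -> mu (S @^-1` N) = 0%E -> (forall x, ~ N x -> phi1 x = phi2 x) ->
  II phi1 psi = II phi2 psi.
Proof.
move=> f1 f2 g BN N0 h; apply: ae_eq_integral => //; try exact: II_meas.
exists (S @^-1` N); split => //; first exact: mS.
move=> y /= hy; apply: contrapT => nN; apply: hy => _; rewrite h //.
Qed.

End integ.

Lemma squeezeE {R : realType} (x : nat -> \bar R) (lo up : nat -> nat -> \bar R)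
  (Lo Up : nat -> \bar R) (a : R) :
  (forall l, x l \is a fin_num) -> (forall k l, lo k l \is a fin_num) ->
  (forall k l, up k l \is a fin_num) -> (forall k, Lo k \is a fin_num) ->
  (forall k, Up k \is a fin_num) ->
  (forall k l, (lo k l <= x l)%E /\ (x l <= up k l)%E) ->
  (forall k, lo k @ \oo --> Lo k) -> (forall k, up k @ \oo --> Up k) ->
  Lo @ \oo --> a%:E -> Up @ \oo --> a%:E -> x @ \oo --> a%:E.
Proof.
move=> xf lof upf Lof Upf hle clo cup cLo cUp.
apply: cvg_EFin; first exact: nearW.
apply/cvgrPdist_le => e e0.
have e2 : 0 < e / 2 by rewrite divr_gt0.
have hL : \forall t \near \oo, `|a - fine (Lo t)| <= e / 2.
  by move: cLo => /fine_cvg /cvgrPdist_le; apply.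
have hU : \forall t \near \oo, `|a - fine (Up t)| <= e / 2.
  by move: cUp => /fine_cvg /cvgrPdist_le; apply.
have [k [hk1 hk2]] := filter_ex (filterI hL hU).
have cl : lo k @ \oo --> (fine (Lo k))%:E by rewrite fineK.
have cu : up k @ \oo --> (fine (Up k))%:E by rewrite fineK.
have h1 : \forall t \near \oo, `|fine (Lo k) - fine (lo k t)| <= e / 2.
  by move: cl => /fine_cvg /cvgrPdist_le; apply.
have h2 : \forall t \near \oo, `|fine (Up k) - fine (up k t)| <= e / 2.
  by move: cu => /fine_cvg /cvgrPdist_le; apply.
near=> l.
have [u1 u2] := hle k l.
have v1 : fine (lo k l) <= fine (x l) := fine_le (lof k l) (xf l) u1.
have v2 : fine (x l) <= fine (up k l) := fine_le (xf l) (upf k l) u2.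
have w1 : `|fine (Lo k) - fine (lo k l)| <= e / 2 by near: l.
have w2 : `|fine (Up k) - fine (up k l)| <= e / 2 by near: l.
move: hk1 hk2 w1 w2; rewrite /= !ler_norml.
move=> /andP[? ?] /andP[? ?] /andP[? ?] /andP[? ?]; apply/andP; split; lra.
Unshelve. all: by end_near. Qed.

Lemma sig_setI {T : Type} (K : set (set T)) (A B : set T) :
  <<s [set: T], K >> A -> <<s [set: T], K >> B -> <<s [set: T], K >> (A `&` B).
Proof.
have [h0 hC hU] := smallest_sigma_algebra [set: T] K.
move=> hA hB; rewrite -(setCK (A `&` B)) setCI -setTD; apply: (hC).
rewrite -bigcup2E; apply: (hU) => -[|[|n]] //=; rewrite -setTD; exact: hC.
Qed.

Lemma borel_setI {T : topologicalType} (A B : set T) :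
  Borel A -> Borel B -> Borel (A `&` B).
Proof. exact: sig_setI. Qed.

Lemma II_indicT {R : realType} {dY} {Y : measurableType dY} (mu : probability Y R)
  {E E' : topologicalType} (S : Y -> E) (S' : Y -> E') (mS : borel_map S)
  (mS' : borel_map S') (A : set E) :
  Borel A -> II mu S S' \1_A (cst 1) = mu (S @^-1` A).
Proof.
move=> BA; transitivity (II mu S S' \1_A \1_[set: E']).
  by apply: II_ext => // y; rewrite indicE mem_set.
by rewrite II_indic // ?preimage_setT ?setIT //; apply: borel_open; exact: openT.
Qed.

Lemma II_Tindic {R : realType} {dY} {Y : measurableType dY} (mu : probability Y R)
  {E E' : topologicalType} (S : Y -> E) (S' : Y -> E') (mS : borel_map S)
  (mS' : borel_map S') (B : set E') :
  Borel B -> II mu S S' (cst 1) \1_B = mu (S' @^-1` B).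
Proof.
move=> BB; transitivity (II mu S S' \1_[set: E] \1_B).
  by apply: II_ext => // y; rewrite indicE mem_set.
by rewrite II_indic // ?preimage_setT ?setTI //; apply: borel_open; exact: openT.
Qed.

Lemma II_le2 {R : realType} {dY} {Y : measurableType dY} (mu : probability Y R)
  {E E' : topologicalType} (S : Y -> E) (S' : Y -> E') (mS : borel_map S)
  (mS' : borel_map S') (phi : E -> R) (psi1 psi2 : E' -> R) :
  okf phi -> okf psi1 -> okf psi2 ->
  (forall y, psi1 y <= psi2 y) -> (II mu S S' phi psi1 <= II mu S S' phi psi2)%E.
Proof.
move=> f g1 g2 h; apply: ge0_le_integral.
- exact: measurableT.
- by move=> y _; rewrite lee_fin; have /andP[] := prod01 (S y) (S' y) f g1.
- exact: II_meas.
- exact: II_meas.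
- move=> y _; rewrite lee_fin; apply: ler_wpM2l; last exact: h.
  by case: f => _ /(_ (S y)) /andP[].
Qed.

Lemma pfin {R : realType} {dY} {Y : measurableType dY} (mu : probability Y R)
  (A : set Y) : measurable A -> mu A \is a fin_num.
Proof.
move=> mA; rewrite ge0_fin_numE ?measure_ge0 //.
exact: le_lt_trans (probability_le1 _ mA) (ltry 1).
Qed.

Lemma indep_lambda {R : realType} {dY} {Y : measurableType dY} (mu : probability Y R)
  (T : Type) (S : Y -> T) (a : set Y) (K : set (set T)) :
  measurable a -> setI_closed K ->
  (forall B, <<s [set: T], K >> B -> measurable (S @^-1` B)) ->
  (forall B, K B -> mu (a `&` S @^-1` B) = (mu a * mu (S @^-1` B))%E) ->
  forall B, <<s [set: T], K >> B -> mu (a `&` S @^-1` B) = (mu a * mu (S @^-1` B))%E.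
Proof.
move=> ma KI mK hK.
pose m : {content set Y -> \bar R} := mu.
have m1 : m setT = 1%E := probability_setT mu.
have pf X : measurable X -> m X \is a fin_num := pfin mu X.
pose H := [set B | <<s [set: T], K >> B /\
  m (a `&` S @^-1` B) = (m a * m (S @^-1` B))%E].
suff sH : <<s [set: T], K >> `<=` H by move=> B /sH [].
have [s0 sC sU] := smallest_sigma_algebra [set: T] K.
have afin := pf a ma.
apply: (lambda_system_subset KI); last by [].
- split.
  + by [].
  + split; first by have := sC _ s0; rewrite setD0.
    by rewrite preimage_setT setIT m1 mule1.
  + move=> A B BA [hA eA] [hB eB]; split.
      by rewrite setDE; apply: sig_setI => //; rewrite -setTD; exact: sC.
    have mA := mK _ hA; have mB := mK _ hB.
    have sBA : S @^-1` B `<=` S @^-1` A by move=> x /BA.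
    have -> : S @^-1` (A `\` B) = S @^-1` A `\` S @^-1` B by [].
    have maA := measurableI _ _ ma mA.
    rewrite setIDA measureD //; last by rewrite ltey_eq pf.
    rewrite -setIA (setIidr sBA) eA eB measureD // ?ltey_eq ?pf //.
    rewrite (setIidr sBA) muleBr //.
    by rewrite fin_num_adde_defl // fin_numN pf.
  + move=> F ndF hF; split.
      by apply: sU => n; case: (hF n).
    rewrite preimage_bigcup setI_bigcupr.
    have mF n : measurable (S @^-1` F n) by apply: mK; case: (hF n).
    have c1 : (fun n => m (a `&` S @^-1` F n)) @ \oo -->
        m (\bigcup_n (a `&` S @^-1` F n)).
      apply: (nondecreasing_cvg_mu (fun n => measurableI _ _ ma (mF n))).
        by apply: bigcupT_measurable => n; exact: measurableI.
      move=> n k nk; apply/subsetPset => x [ax Fx]; split => //.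
      by move: (ndF n k nk) => /subsetPset; apply.
    have c2 : (fun n => m (S @^-1` F n)) @ \oo --> m (\bigcup_n S @^-1` F n).
      apply: (nondecreasing_cvg_mu mF); first exact: bigcupT_measurable.
      move=> n k nk; apply/subsetPset => x Fx.
      by move: (ndF n k nk) => /subsetPset; apply.
    have c3 := cvgeZl afin c2.
    have e : (fun n => m (a `&` S @^-1` F n)) = (fun n => m a * m (S @^-1` F n))%E.
      by apply/funext => n; case: (hF n).
    rewrite e in c1.
    exact: (cvg_unique _ c1 c3).
- by move=> B KB; split; [exact: sub_sigma_algebra|exact: hK].
Qed.

Section main.
Context (R : realType) (d : measure_display) (X : measurableType d)
  (d' : measure_display) (Om : measurableType d')
  (E E' : pseudoMetricType R)
  (nu : nat -> probability X R)
  (Rl : nat -> X -> E) (Rl' : nat -> X -> E')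
  (mRl : forall l, borel_map (Rl l)) (mRl' : forall l, borel_map (Rl' l))
  (P : probability Om R) (R0 : Om -> E) (R0' : Om -> E')
  (mR0 : borel_map R0) (mR0' : borel_map R0')
  (Hjoint : weak_conv_law nu (fun l x => (Rl l x, Rl' l x)) P
              (fun w => (R0 w, R0' w))).

Local Notation Il l := (II (nu l) (Rl l) (Rl' l)).
Local Notation J := (II P R0 R0').

Lemma conv (phi : E -> R) (psi : E' -> R) : continuous phi -> continuous psi ->
  (forall x, 0 <= phi x <= 1) -> (forall y, 0 <= psi y <= 1) ->
  (fun l => Il l phi psi) @ \oo --> J phi psi.
Proof.
move=> cphi cpsi h1 h2.
have o1 := okf_cont cphi h1; have o2 := okf_cont cpsi h2.
apply: (Hjoint (fun p => phi p.1 * psi p.2)); split.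
  move=> [x y]; apply: continuousM.
    by apply: (continuous_comp (f := fst)); [exact: cvg_fst|exact: cphi].
  by apply: (continuous_comp (f := snd)); [exact: cvg_snd|exact: cpsi].
exists 1 => -[x y] /=; have /andP[a b] := prod01 x y o1 o2.
by rewrite ger0_norm.
Qed.

Lemma port {A : set E} {g : E' -> R} : Borel A ->
  P (R0 @^-1` boundary A) = 0%E -> continuous g -> (forall y, 0 <= g y <= 1) ->
  (fun l => Il l \1_A g) @ \oo --> J \1_A g.
Proof.
move=> BA b0 cg g01.
have og := okf_cont cg g01.
have oA : okf (\1_A : E -> R) := okf_indic BA.
set C := closure A; set U := interior A.
have cC : closed C by exact: closed_closure.
have cU : closed (~` U) by apply: open_closedC; exact: open_interior.
have UA : U `<=` A by exact: interior_subset.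
have AC : A `<=` C by exact: subset_closure.
have BN : Borel (boundary A).
  apply: borel_setI; first exact: borel_closed.
  exact: borel_closed.
have oh k : okf (hk C k).
  by apply: okf_cont; [exact: hk_cont|move=> x; rewrite hk_ge0 hk_le1].
pose lo k x := 1 - hk (~` U) k x.
have ol k : okf (lo k).
  apply: okf_cont.
    by move=> x; apply: continuousB; [exact: cvg_cst|exact: hk_cont].
  move=> x; rewrite /lo subr_ge0 hk_le1 /= lerBlDr lerDl hk_ge0 //.
have oC : okf (\1_C : E -> R) by apply: okf_indic; exact: borel_closed.
have oU : okf (\1_U : E -> R).
  by apply: okf_indic; apply: borel_open; exact: open_interior.
have eqC : J \1_C g = J \1_A g.
  apply: (II_ae P R0 R0' mR0 mR0' _ _ _ (boundary A)) => // x nN.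
  rewrite !indicE; have [Ax|nAx] := pselect (A x).
    by rewrite !mem_set //; exact: AC.
  by rewrite (memNset nAx) memNset //= => Cx; apply: nN; split => // /UA.
have eqU : J \1_U g = J \1_A g.
  apply: (II_ae P R0 R0' mR0 mR0' _ _ _ (boundary A)) => // x nN.
  rewrite !indicE; have [Ax|nAx] := pselect (A x).
    rewrite (mem_set Ax) mem_set //; apply: contrapT => nU; apply: nN.
    by split => //; exact: AC.
  by rewrite (memNset nAx) memNset // => /UA.
rewrite -(fineK (II_fin P R0 R0' mR0 mR0' oA og)).
apply: (@squeezeE _ _ (fun k l => Il l (lo k) g) (fun k l => Il l (hk C k) g)
  (fun k => J (lo k) g) (fun k => J (hk C k) g)).
- by move=> l; exact: II_fin.
- by move=> k l; exact: II_fin.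
- by move=> k l; exact: II_fin.
- by move=> k; exact: II_fin.
- by move=> k; exact: II_fin.
- move=> k l; split; apply: II_le => // x; rewrite indicE.
    have [Ux|nUx] := pselect (U x).
      rewrite mem_set; last exact: UA.
      by rewrite /lo lerBlDr lerDl hk_ge0.
    by rewrite /lo hk_in // subrr; case: (x \in A).
  have [Ax|nAx] := pselect (A x).
    by rewrite mem_set // hk_in //; exact: AC.
  by rewrite memNset // hk_ge0.
- move=> k; apply: conv => //.
    by move=> x; apply: continuousB; [exact: cvg_cst|exact: hk_cont].
  by case: (ol k).
- move=> k; apply: conv => //; first exact: hk_cont.
  by move=> x; rewrite hk_ge0 hk_le1.
- rewrite fineK ?(II_fin P R0 R0' mR0 mR0' oA og) // -eqU.
  apply: II_dct => //; last by move=> y; exact: cvg_cst.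
  move=> x; rewrite /lo.
  have -> : (\1_U x : R) = 1 - \1_(~` U) x.
    rewrite !indicE; have [Ux|nUx] := pselect (U x).
      by rewrite mem_set // memNset ?subr0 //.
    by rewrite memNset // mem_set // subrr.
  by apply: cvgB; [exact: cvg_cst|exact: hk_cvg].
- rewrite fineK ?(II_fin P R0 R0' mR0 mR0' oA og) // -eqC.
  apply: II_dct => //; last by move=> y; exact: cvg_cst.
  by move=> x; exact: hk_cvg.
Qed.

Section key.
Context (G : set (set E)) (HGgen : <<s [set: E], G >> = @Borel E)
  (HG : forall A, G A ->
     P (R0 @^-1` boundary A) = 0%E /\
     ((0 < P (R0 @^-1` A))%E ->
        weak_conv_law_cond nu (fun l => Rl l @^-1` A) Rl' P R0')).

Lemma GBorel {A} : G A -> Borel A.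
Proof. by move=> GA; rewrite -HGgen; exact: sub_sigma_algebra. Qed.

Lemma key (A : set E) (g : E' -> R) : G A -> continuous g ->
  (forall y, 0 <= g y <= 1) ->
  J \1_A g = (P (R0 @^-1` A) * J (cst 1%R) g)%E.
Proof.
move=> GA cg g01.
have BA := GBorel GA.
have [b0 hcond] := HG A GA.
have og := okf_cont cg g01.
have oA : okf (\1_A : E -> R) := okf_indic BA.
have o1 : okf (cst 1%R : E' -> R) := okf_cst1.
have c1 : continuous (cst 1%R : E' -> R) by move=> y; exact: cvg_cst.
have h1 : forall y : E', 0 <= (cst 1 y : R) <= 1 by move=> y; rewrite ler01 lexx.
have cA := port BA b0 cg g01.
have cB := port BA b0 c1 h1.
rewrite (II_indicT P R0 R0' mR0 mR0' A BA) in cB.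
have bfin : P (R0 @^-1` A) \is a fin_num by apply: pfin; exact: mR0.
have o1E : okf (cst 1%R : E -> R) := okf_cst1.
have cfin : J (cst 1%R) g \is a fin_num := II_fin P R0 R0' mR0 mR0' o1E og.
have [b0'|bpos] : P (R0 @^-1` A) = 0%E \/ (0 < P (R0 @^-1` A))%E.
  have := measure_ge0 P (R0 @^-1` A).
  by rewrite le_eqVlt => /orP[/eqP <-|]; [left|right].
  rewrite b0' mul0e; apply/eqP; rewrite eq_le II_ge0 // andbT.
  rewrite -b0' -(II_indicT P R0 R0' mR0 mR0' A BA).
  apply: II_le2 => // y; have /andP[] := g01 y => //.
have bd : bounded_continuous g.
  split => //; exists 1 => y; have /andP[a b] := g01 y; by rewrite ger0_norm.
have hw := hcond bpos g bd.
have e1 l : (\int[nu l]_(x in Rl l @^-1` A) (g (Rl' l x))%:E)%E = Il l \1_A g.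
  rewrite integral_mkcond /II; apply: eq_integral => x _.
  rewrite /patch indicE.
  have -> : (x \in Rl l @^-1` A) = (Rl l x \in A) by [].
  by case: (Rl l x \in A); rewrite ?mul1r ?mul0r.
have e2 l : nu l (Rl l @^-1` A) = Il l \1_A (cst 1%R).
  by rewrite (II_indicT (nu l) (Rl l) (Rl' l) (mRl l) (mRl' l) A BA).
have e3 : (\int[P]_w (g (R0' w))%:E)%E = J (cst 1%R) g.
  by apply: eq_integral => w _; rewrite /= mul1r.
have hr : (fun l => Il l \1_A g / Il l \1_A (cst 1%R))%E @ \oo --> J (cst 1%R) g.
  rewrite -e3.
  have -> : (fun l => Il l \1_A g / Il l \1_A (cst 1%R))%E =
     (fun l => (\int[nu l]_(x in Rl l @^-1` A) (g (Rl' l x))%:E)%E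
         / nu l (Rl l @^-1` A))%E.
    by apply/funext => l; rewrite e1 e2.
  exact: hw.
have pb : 0 < fine (P (R0 @^-1` A)) by rewrite -lte_fin fineK.
have cB' : (fun l => Il l \1_A (cst 1%R)) @ \oo --> (fine (P (R0 @^-1` A)))%:E.
  by rewrite fineK.
have ev : \forall l \near \oo, 0 < fine (Il l \1_A (cst 1%R)).
  exact: (cvgr_gt _ (fine_cvg cB') _ pb).
have hprod := cvgeM (mule_def_fin cfin bfin) hr cB.
have heq : {near \oo, (fun l => Il l \1_A g / Il l \1_A (cst 1%R) * Il l \1_A (cst 1%R))%E
    =1 (fun l => Il l \1_A g)}.
  near=> l.
  have yfin : Il l \1_A (cst 1%R) \is a fin_num := II_fin _ _ _ (mRl l) (mRl' l) oA o1.
  have ypos : 0 < fine (Il l \1_A (cst 1%R)) by near: l.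
  rewrite -[Il l \1_A (cst 1%R)](fineK yfin) inver (gt_eqF ypos) /=.
  by rewrite -muleA -EFinM mulVf ?gt_eqF // mule1.
have hx : (fun l => Il l \1_A g) @ \oo --> (J (cst 1%R) g * P (R0 @^-1` A))%E.
  by apply: (cvg_trans (near_eq_cvg heq)); exact: hprod.
have hh : J \1_A g = (J (cst 1%R) g * P (R0 @^-1` A))%E by exact: (cvg_unique _ cA hx).
by rewrite hh muleC.
Unshelve. all: by end_near. Qed.

Lemma step2 (A : set E) (B : set E') : G A -> closed B ->
  P (R0 @^-1` A `&` R0' @^-1` B) = (P (R0 @^-1` A) * P (R0' @^-1` B))%E.
Proof.
move=> GA cB.
have BA := GBorel GA.
have BB := borel_closed B cB.
have h01 k : forall y, 0 <= hk B k y <= 1 by move=> y; rewrite hk_ge0 hk_le1.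
have ohB k : okf (hk B k) := okf_cont (hk_cont B k) (h01 k).
have oA : okf (\1_A : E -> R) := okf_indic BA.
have oB : okf (\1_B : E' -> R) := okf_indic BB.
have o1E : okf (cst 1%R : E -> R) := okf_cst1.
have c1 : (fun k => J \1_A (hk B k)) @ \oo --> J \1_A \1_B.
  apply: II_dct => //; [move=> x; exact: cvg_cst|move=> y; exact: hk_cvg].
have c2 : (fun k => J (cst 1%R) (hk B k)) @ \oo --> J (cst 1%R) \1_B.
  apply: II_dct => //; [move=> x; exact: cvg_cst|move=> y; exact: hk_cvg].
have bfin : P (R0 @^-1` A) \is a fin_num by apply: pfin; exact: mR0.
have c3 := cvgeZl bfin c2.
have e : (fun k => J \1_A (hk B k)) =
    (fun k => P (R0 @^-1` A) * J (cst 1%R) (hk B k))%E.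
  by apply/funext => k; apply: key => //; exact: hk_cont.
rewrite e in c1.
have hh : J \1_A \1_B = (P (R0 @^-1` A) * J (cst 1%R) \1_B)%E.
  exact: (cvg_unique _ c1 c3).
rewrite (II_indic P R0 R0' mR0 mR0' A B BA BB) in hh.
by rewrite hh (II_Tindic P R0 R0' mR0 mR0' B BB).
Qed.

End key.

End main.

Theorem mainTheorem11 (R : realType) (d : measure_display) (X : measurableType d)
  (d' : measure_display) (Om : measurableType d')
  (E E' : pseudoMetricType R)
  (hE : hausdorff_space E) (cE : compact [set: E])
  (hE' : hausdorff_space E') (cE' : compact [set: E'])
  (nu : nat -> probability X R)
  (Rl : nat -> X -> E) (Rl' : nat -> X -> E')
  (mRl : forall l, borel_map (Rl l)) (mRl' : forall l, borel_map (Rl' l))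
  (P : probability Om R) (R0 : Om -> E) (R0' : Om -> E')
  (mR0 : borel_map R0) (mR0' : borel_map R0')
  (Hjoint : weak_conv_law nu (fun l x => (Rl l x, Rl' l x)) P
              (fun w => (R0 w, R0' w)))
  (G : set (set E)) (HGpi : setI_closed G)
  (HGgen : <<s [set: E], G >> = @Borel E)
  (HG : forall A, G A ->
     P (R0 @^-1` boundary A) = 0%E /\
     ((0 < P (R0 @^-1` A))%E ->
        weak_conv_law_cond nu (fun l => Rl l @^-1` A) Rl' P R0')) :
  forall (A : set E) (B : set E'), Borel A -> Borel B ->
    P (R0 @^-1` A `&` R0' @^-1` B) = (P (R0 @^-1` A) * P (R0' @^-1` B))%E.
Proof.
have st2 := @step2 R d X d' Om E E' nu Rl Rl' mRl mRl' P R0 R0' mR0 mR0' Hjoint G HGgen HG.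
have h1 : forall A, G A -> forall B, Borel B ->
    P (R0 @^-1` A `&` R0' @^-1` B) = (P (R0 @^-1` A) * P (R0' @^-1` B))%E.
  move=> A GA B BB.
  have BA : Borel A by rewrite -HGgen; exact: sub_sigma_algebra.
  have sub : Borel B -> <<s [set: E'], closed >> B.
    apply: smallest_sub; first exact: smallest_sigma_algebra.
    move=> U oU; rewrite -(setCK U) -setTD.
    have [_ hC _] := smallest_sigma_algebra [set: E'] closed.
    apply: hC; apply: sub_sigma_algebra; exact: open_closedC.
  apply: (@indep_lambda _ _ _ P _ R0' (R0 @^-1` A) closed).
  - exact: mR0.
  - exact: closedI.
  - move=> B' hB'; apply: mR0'.
    move: hB'; apply: smallest_sub; first exact: smallest_sigma_algebra.
    by move=> C cC; exact: borel_closed.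
  - by move=> B' cB'; exact: st2.
  - exact: sub.
move=> A B BA BB.
have mb : measurable (R0' @^-1` B) by exact: mR0'.
have := @indep_lambda _ _ _ P _ R0 (R0' @^-1` B) G mb HGpi.
move=> /(_ _ _ A) h.
rewrite setIC muleC h //.
- move=> A' hA'; apply: mR0; rewrite -HGgen //.
- by move=> A' GA'; rewrite setIC muleC; apply: h1.
- by rewrite HGgen.
Qed.
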